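(* Let $(\Omega,\mathcal F,Q)$ be a probability space and $\pi>0$. Let $c:\mathbb R\to\mathbb R$ be non-decreasing and continuous, and let $\alpha_1:\mathbb R\times\Omega\to[0,\pi]$ be $\mathcal B(\mathbb R)\otimes\mathcal F$-measurable such that $g\mapsto\alpha_1(g)(\omega)$ is non-decreasing for almost all $\omega\in\Omega$. Let $\varepsilon$ be a random variable such that the map $\mathbb R\to[0,\pi]$, $x\mapsto \mathbb E^Q(\alpha_1(x+\varepsilon))=\int_\Omega\alpha_1(x+\varepsilon(\omega'))(\omega')\,Q(d\omega')$ is continuous. For each $g\in\mathbb R$ define $f^g:[0,\pi]\to\mathbb R$ by $$f^g(a)=a-\int_\Omega\alpha_1\big(g-c(a)+\varepsilon(\omega')\big)(\omega')\,Q(d\omega').$$ Then: (i) for each $g\in\mathbb R$ there exists a unique $\alpha_0(g)\in[0,\pi]$ with $f^g(\alpha_0(g))=0$; (ii) $\alpha_0(g)=\lim_{n\to\infty}a^g_n$, where $a^g_n=\tfrac12(\overline a^g_n+\underline a^g_n)$ with $\underline a^g_0=0$, $\overline a^g_0=\pi$, and $(\overline a^g_{n+1},\underline a^g_{n+1})=(a^g_n,\underline a^g_n)$ if $f^g(a^g_n)\ge 0$, $(\overline a^g_{n+1},\underline a^g_{n+1})=(\overline a^g_n,a^g_n)$ if $f^g(a^g_n)<0$; (iii) the map $\mathbb R\to[0,\pi]$, $g\mapsto\alpha_0(g)$, is non-decreasing and continuous. *)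

(* Defs.v *)
From HB Require Import structures.
From mathcomp Require Import all_boot all_order all_algebra.
From mathcomp Require Import all_classical all_reals all_analysis.
Set Implicit Arguments. Unset Strict Implicit. Unset Printing Implicit Defensive.
Import Order.TTheory GRing.Theory Num.Theory.
Local Open Scope ring_scope.

Fixpoint bisect (R : realType) (F : R -> R) (pi : R) (n : nat) : R * R :=
  match n with
  | 0%N => (pi, 0)
  | n'.+1 => let p := bisect F pi n' in
             let m := (p.1 + p.2) / 2 in
             if 0 <= F m then (m, p.2) else (p.1, m)
  end.

Definition bisect_mid (R : realType) (F : R -> R) (pi : R) (n : nat) : R :=
  ((bisect F pi n).1 + (bisect F pi n).2) / 2.

(* Main.v *)
Require Import Defs.
From HB Require Import structures.
From mathcomp Require Import all_boot all_order all_algebra.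
From mathcomp Require Import all_classical all_reals all_analysis.
From mathcomp Require Import measurable_realfun ring lra.
Import Order.TTheory GRing.Theory Num.Theory numFieldNormedType.Exports.
Local Open Scope ring_scope.
Local Open Scope classical_set_scope.
Section G.
Context (R : realType) (d : measure_display) (Omega : measurableType d)
  (Q : probability Omega R) (pi : R) (alpha1 : R -> Omega -> R) (eps : Omega -> R).
Hypothesis ma : measurable_fun [set: R * Omega] (fun p : R * Omega => alpha1 p.1 p.2).
Hypothesis ab : forall g w, 0 <= alpha1 g w <= pi.
Hypothesis amono : {ae Q, forall w, {homo (fun g => alpha1 g w) : x y / x <= y}}.
Hypothesis meps : measurable_fun [set: Omega] eps.

Let G x := Rintegral Q [set: Omega] (fun w => alpha1 (x + eps w) w).

Lemma mG x : measurable_fun [set: Omega] (fun w => alpha1 (x + eps w) w).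
Proof.
apply: (measurableT_comp (f := fun p : R * Omega => alpha1 p.1 p.2) (g := fun w => (x + eps w, w))) => //.
apply: measurable_fun_pair => //.
by apply: measurable_funD.
Qed.

Lemma mGE x : measurable_fun [set: Omega] (fun w => (alpha1 (x + eps w) w)%:E).
Proof. exact/measurable_EFinP/mG. Qed.

Lemma IG_bnd x : (0 <= \int[Q]_(w in [set: Omega]) (alpha1 (x + eps w) w)%:E <= pi%:E)%E.
Proof.
apply/andP; split.
  by apply: integral_ge0 => w _; rewrite lee_fin; case/andP: (ab (x + eps w) w).
apply: (@le_trans _ _ (\int[Q]_(w in [set: Omega]) pi%:E)%E).
  apply: ge0_le_integral => //; try exact: mGE.
    by move=> w _; rewrite lee_fin; case/andP: (ab (x + eps w) w).
  by move=> w _; rewrite lee_fin; case/andP: (ab (x + eps w) w).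
by rewrite integral_cst //= probability_setT mule1.
Qed.

Lemma G_bnd x : 0 <= G x <= pi.
Proof.
have /andP[h1 h2] := IG_bnd x.
rewrite /G /Rintegral; apply/andP; split; first exact: fine_ge0.
have : (\int[Q]_(w in [set: Omega]) (alpha1 (x + eps w) w)%:E)%E \is a fin_num.
  by rewrite ge0_fin_numE // (le_lt_trans h2) // ltry.
move/fineK => E; by rewrite -lee_fin E.
Qed.

Lemma G_mono x y : x <= y -> G x <= G y.
Proof.
move=> xy.
have /andP[h1 h2] := IG_bnd x.
have /andP[h3 h4] := IG_bnd y.
rewrite /G /Rintegral; apply: fine_le.
- by rewrite ge0_fin_numE // (le_lt_trans h2) // ltry.
- by rewrite ge0_fin_numE // (le_lt_trans h4) // ltry.
apply: ae_ge0_le_integral => //; try exact: mGE.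
- by move=> w _; rewrite lee_fin; case/andP: (ab (x + eps w) w).
- by move=> w _; rewrite lee_fin; case/andP: (ab (y + eps w) w).
apply: filterS amono => w hw _; rewrite lee_fin; apply: hw; by rewrite lerD2r.
Qed.
End G.

Lemma bisect_inv {R : realType} (F : R -> R) (pi r : R) :
  0 <= r <= pi -> F r = 0 -> (forall a b, a < b -> F a < F b) ->
  forall n, (bisect F pi n).2 <= r <= (bisect F pi n).1 /\
            (bisect F pi n).1 - (bisect F pi n).2 = pi / 2 ^+ n.
Proof.
move=> /andP[r0 rpi] Fr Fm; elim=> [|n [/andP[h1 h2] h3]].
  by rewrite /= r0 rpi expr0 divr1 subr0.
rewrite /=; set m := ((bisect F pi n).1 + (bisect F pi n).2) / 2.
have e2 : pi / 2 ^+ n.+1 = pi / 2 ^+ n / 2 by rewrite exprS invfM mulrA mulrAC.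
case: ifP => Hm /=.
- split; last by rewrite /m e2 -h3; field.
  rewrite h1 /=; rewrite leNgt; apply/negP => mr.
  by have := Fm _ _ mr; rewrite Fr ltNge Hm.
- split; last by rewrite /m e2 -h3; field.
  rewrite h2 andbT; rewrite leNgt; apply/negP => rm.
  have := Fm _ _ rm; rewrite Fr => H; by move/negbT: Hm; rewrite -ltNge => /(lt_trans H); rewrite ltxx.
Qed.

Lemma bisect_cvg (R : realType) (F : R -> R) (pi r : R) :
  0 < pi -> 0 <= r <= pi -> F r = 0 -> (forall a b, a < b -> F a < F b) ->
  bisect_mid F pi n @[n --> \oo] --> r.
Proof.
move=> pi0 hr Fr Fm.
have H := @bisect_inv R F pi r hr Fr Fm.
have ex : (GRing.exp (2^-1 : R) : R ^nat) @ \oo --> 0.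
  apply: cvg_expr; rewrite ger0_norm; last by [].
  by rewrite invf_lt1 // ltr1n.
apply/cvgrPdist_lt => e e0.
have : 0 < e / pi by rewrite divr_gt0.
move=> /(cvgr_dist_lt _ _ ex) H2; apply: filterS H2 => n.
rewrite sub0r normrN ger0_norm; last by apply: exprn_ge0; rewrite invr_ge0.
rewrite ltr_pdivlMr // => hn.
have [/andP[h1 h2] h3] := H n.
have e3 : pi / 2 ^+ n = 2^-1 ^+ n * pi by rewrite exprVn mulrC.
rewrite /bisect_mid; apply: (le_lt_trans _ hn); rewrite -e3 -h3.
rewrite ler_norml; apply/andP; split; lra.
Qed.

Lemma main_abs (R : realType) (pi : R) (c G : R -> R) :
  0 < pi -> {homo c : x y / x <= y} -> continuous c ->
  (forall x, 0 <= G x <= pi) -> {homo G : x y / x <= y} -> continuous G ->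
  let f := fun g a : R => a - G (g - c a) in
  exists alpha0 : R -> R,
    [/\ (forall g, 0 <= alpha0 g <= pi /\ f g (alpha0 g) = 0
                   /\ (forall a, 0 <= a <= pi -> f g a = 0 -> a = alpha0 g)),
        (forall g, bisect_mid (f g) pi n @[n --> \oo] --> alpha0 g),
        {homo alpha0 : x y / x <= y} &
        continuous alpha0].
Proof.
move=> pi0 cm cc Gb Gm Gc f.
have fs : forall g a b, a < b -> f g a < f g b.
  move=> g a b ab; rewrite /f.
  have : G (g - c b) <= G (g - c a).
    by apply: Gm; rewrite lerD2l lerN2; apply: cm; apply: ltW.
  lra.
have fa : forall g1 g2 a, g1 <= g2 -> f g2 a <= f g1 a.
  move=> g1 g2 a g12; rewrite /f.
  have : G (g1 - c a) <= G (g2 - c a) by apply: Gm; rewrite lerD2r.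
  lra.
have Gsc : forall k, continuous (fun x => G (x - k)).
  move=> k x; apply: (continuous_comp (f := fun x => x - k) (g := G)); last exact: Gc.
  by apply: continuousB => //; apply: cvg_cst.
have fc : forall g, continuous (f g).
  move=> g x; apply: continuousB => //.
  apply: (continuous_comp (f := fun a => g - c a) (g := G)); last exact: Gc.
  apply: continuousB; first exact: cvg_cst.
  exact: cc.
have ex : forall g, exists a, 0 <= a <= pi /\ f g a = 0.
  move=> g.
  have h0 : f g 0 <= 0 by rewrite /f; have := Gb (g - c 0); lra.
  have h1 : 0 <= f g pi by rewrite /f; have := Gb (g - c pi); lra.
  have hm : Num.min (f g 0) (f g pi) <= 0 <= Num.max (f g 0) (f g pi).
    by rewrite ge_min h0 /= le_max h1 orbT.
  have [a ha fa0] := @IVT R (f g) 0 pi 0 (ltW pi0) (@continuous_subspaceT _ _ _ (f g) (fc g)) hm.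
  by exists a; split => //; move: ha; rewrite in_itv.
pose alpha0 g := proj1_sig (cid (ex g)).
have a0 : forall g, 0 <= alpha0 g <= pi /\ f g (alpha0 g) = 0.
  by move=> g; rewrite /alpha0; case: cid.
have uniq : forall g a, f g a = 0 -> a = alpha0 g.
  move=> g a fga; have [_ h] := a0 g.
  have [H|H|//] := ltgtP a (alpha0 g).
  - by have := fs g _ _ H; rewrite fga h ltxx.
  - by have := fs g _ _ H; rewrite fga h ltxx.
exists alpha0; split.
- move=> g; have [h1 h2] := a0 g; split => //; split => //.
  by move=> a _; apply: uniq.
- move=> g; have [h1 h2] := a0 g.
  by apply: bisect_cvg => //; apply: fs.
- move=> g1 g2 g12; rewrite leNgt; apply/negP => H.
  have [_ h1] := a0 g1; have [_ h2] := a0 g2.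
  have := fs g2 _ _ H; have := fa _ _ (alpha0 g1) g12; rewrite h1 h2; lra.
- move=> g; apply/cvgrPdist_lt => e e0.
  have [_ h] := a0 g.
  set b1 := alpha0 g + e / 2; set b2 := alpha0 g - e / 2.
  have p1 : 0 < f g b1 by rewrite -h; apply: fs; rewrite /b1; lra.
  have p2 : f g b2 < 0 by rewrite -h; apply: fs; rewrite /b2; lra.
  have c1 : (fun x => f x b1) @ g --> f g b1.
    by rewrite /f; apply: cvgB; [exact: cvg_cst| exact: Gsc].
  have c2 : (fun x => f x b2) @ g --> f g b2.
    by rewrite /f; apply: cvgB; [exact: cvg_cst| exact: Gsc].
  have n1 := @cvgr_gt _ _ _ _ _ _ c1 _ p1.
  have n2 := @cvgr_lt _ _ _ _ _ _ c2 _ p2.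
  near=> x.
  have q1 : 0 < f x b1 by near: x; exact: n1.
  have q2 : f x b2 < 0 by near: x; exact: n2.
  have [_ hx] := a0 x.
  have r1 : alpha0 x < b1.
    rewrite ltNge; apply/negP; rewrite le_eqVlt => /orP[/eqP E|E].
      by move: q1; rewrite E hx ltxx.
    by have := fs x _ _ E; rewrite hx; lra.
  have r2 : b2 < alpha0 x.
    rewrite ltNge; apply/negP; rewrite le_eqVlt => /orP[/eqP E|E].
      by move: q2; rewrite -E hx ltxx.
    by have := fs x _ _ E; rewrite hx; lra.
  rewrite ltr_norml; apply/andP; split; rewrite /b1 /b2 in r1 r2; lra.
Unshelve. all: by end_near.
Qed.

Theorem lemma1 (R : realType) (d : measure_display) (Omega : measurableType d)
  (Q : probability Omega R) (pi : R) (c : R -> R) (alpha1 : R -> Omega -> R)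
  (eps : Omega -> R) :
  0 < pi ->
  {homo c : x y / x <= y} ->
  continuous c ->
  measurable_fun [set: R * Omega] (fun p : R * Omega => alpha1 p.1 p.2) ->
  (forall g w, 0 <= alpha1 g w <= pi) ->
  {ae Q, forall w, {homo (fun g => alpha1 g w) : x y / x <= y}} ->
  measurable_fun [set: Omega] eps ->
  continuous (fun x : R => Rintegral Q [set: Omega] (fun w => alpha1 (x + eps w) w)) ->
  let f := fun g a : R =>
    a - Rintegral Q [set: Omega] (fun w => alpha1 (g - c a + eps w) w) in
  exists alpha0 : R -> R,
    [/\ (forall g, 0 <= alpha0 g <= pi /\ f g (alpha0 g) = 0
                   /\ (forall a, 0 <= a <= pi -> f g a = 0 -> a = alpha0 g)),
        (forall g, bisect_mid (f g) pi n @[n --> \oo] --> alpha0 g),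
        {homo alpha0 : x y / x <= y} &
        continuous alpha0].
Proof.
move=> pi0 cm cc ma ab amono meps Gc.
apply: (@main_abs R pi c (fun x => Rintegral Q [set: Omega] (fun w => alpha1 (x + eps w) w))) => //.
- by move=> x; apply: (@G_bnd R d Omega Q pi alpha1 eps ma ab meps).
- by move=> x y; apply: (@G_mono R d Omega Q pi alpha1 eps ma ab amono meps).
Qed.
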